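(* Let $r$ be a prime power and let $f\in\mathbb{F}_r[t_1,t_2]$ be a non-constant polynomial of degree at most $2$. Then the map $\mathbb{F}_r^2\to\mathbb{F}_r$ induced by $f$ takes at least $\lceil r/2\rceil$ distinct values. *)

(* Defs.v *)
From HB Require Import structures.
From mathcomp Require Import all_boot all_algebra.
From mathcomp Require Export mpoly.
Set Implicit Arguments. Unset Strict Implicit. Unset Printing Implicit Defensive.
Import GRing.Theory.
Local Open Scope ring_scope.

(* Total degree of a multivariate polynomial: msize p = 1 + total degree for
   p != 0 and msize 0 = 0 (cf. size for univariate polynomials). *)
Definition mtotdeg (n : nat) (R : ringType) (p : {mpoly R[n]}) : nat :=
  (msize p).-1.

Definition mnonconst (n : nat) (R : ringType) (p : {mpoly R[n]}) : bool :=
  (1 < msize p)%N.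

Definition mvalues (n : nat) (F : finFieldType) (p : {mpoly F[n]}) : {set F} :=
  [set p.@[v] | v : {ffun 'I_n -> F}].

(* Main.v *)
Require Import Defs.
From mathcomp Require Import all_boot all_algebra.
From mathcomp Require Import mpoly.
From mathcomp Require Import zify ring.
Set Implicit Arguments. Unset Strict Implicit. Unset Printing Implicit Defensive.
Import GRing.Theory.
Local Open Scope ring_scope.

Definition mk (a b : nat) : 'X_{1..2} := [multinom [tuple a; b]].
Definition Lm : seq 'X_{1..2} := [:: mk 0 0; mk 1 0; mk 0 1; mk 2 0; mk 1 1; mk 0 2].

Lemma Lm_uniq : uniq Lm.
Proof.
have ne : forall a b c d, (a != c)%N || (b != d)%N -> mk a b != mk c d.
  move=> a b c d /orP[] h; apply/eqP => /mnmP e.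
    by move: (e ord0) => /= /eqP; rewrite (negbTE h).
  by move: (e (lift ord0 ord0)) => /= /eqP; rewrite (negbTE h).
rewrite /Lm /=.
by [].
Qed.

Lemma mk_eta (m : 'X_{1..2}) : m = mk (m ord0) (m (lift ord0 ord0)).
Proof.
apply/mnmP => i; case: i => [[|[|//]]] Hi.
  by rewrite (_ : Ordinal Hi = ord0) //; apply: val_inj.
by rewrite (_ : Ordinal Hi = lift ord0 ord0) //; apply: val_inj.
Qed.

Lemma mdeg2 (m : 'X_{1..2}) : mdeg m = (m ord0 + m (lift ord0 ord0))%N.
Proof. by rewrite mdegE big_ord_recl big_ord1. Qed.

Lemma mem_Lm (m : 'X_{1..2}) : (mdeg m < 3)%N -> m \in Lm.
Proof.
rewrite mdeg2 (mk_eta m).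
case: (m ord0) => [|[|[|a]]]; case: (m (lift ord0 ord0)) => [|[|[|b]]] //= _;
  by rewrite /Lm !inE eqxx ?orbT.
Qed.

Lemma eval_formula (F : finFieldType) (f : {mpoly F[2]}) (v : 'I_2 -> F) :
  (msize f <= 3)%N ->
  f.@[v] = \sum_(m <- Lm) f@_m * (v ord0 ^+ m ord0 * v (lift ord0 ord0) ^+ m (lift ord0 ord0)).
Proof.
move=> hs; rewrite mevalE.
under eq_bigr do rewrite big_ord_recl big_ord1.
have -> : \sum_(m <- Lm) f@_m * (v ord0 ^+ m ord0 * v (lift ord0 ord0) ^+ m (lift ord0 ord0))
   = \sum_(m <- Lm | m \in msupp f) f@_m * (v ord0 ^+ m ord0 * v (lift ord0 ord0) ^+ m (lift ord0 ord0)).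
  rewrite [RHS]big_mkcond /=; apply: eq_bigr => m _.
  by case: ifP => // /negbT; rewrite mcoeff_msupp negbK => /eqP ->; rewrite mul0r.
rewrite -[RHS]big_filter; apply: perm_big.
apply: uniq_perm; first exact: msupp_uniq.
  by rewrite filter_uniq // Lm_uniq.
move=> m; rewrite mem_filter; apply/idP/andP => [h|[]//]; split => //.
apply: mem_Lm; exact: (leq_trans (msize_mdeg_lt h) hs).
Qed.

Lemma quad_count (F : finFieldType) (A B C : F) : (A != 0) || (B != 0) ->
  ((#|F| + 1) %/ 2 <= #|[set (A * t ^+ 2 + B * t + C)%R | t : F]|)%N.
Proof.
move=> hAB.
set I := [set _ | t : F].
pose h t := if A == 0 then t else - (B / A) - t.
pose phi t := (A * t ^+ 2 + B * t + C, (enum_rank t < enum_rank (h t))%N).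
have inj : injective phi.
  move=> s t [e1 e2].
  have hst : (s - t) * (A * (s + t) + B) = 0.
    have -> : (s - t) * (A * (s + t) + B) = (A * s ^+ 2 + B * s + C) - (A * t ^+ 2 + B * t + C) by ring.
    by rewrite e1 subrr.
  move/eqP: hst; rewrite mulf_eq0 => /orP[/eqP h0|/eqP h0].
    by apply/eqP; rewrite -subr_eq0 h0.
  case: (eqVneq A 0) => hA.
    by move: h0 hAB; rewrite hA mul0r add0r => ->; rewrite eqxx.
  have hs : s = h t.
    rewrite /h (negbTE hA).
    have e : s = (A * (s + t) + B) / A - B / A - t by field.
    by rewrite e h0 mul0r sub0r.
  have ht : t = h s.
    rewrite /h (negbTE hA).
    have e : t = (A * (s + t) + B) / A - B / A - s by field.
    by rewrite e h0 mul0r sub0r.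
  move: e2; rewrite -hs -ht.
  case: (ltngtP (enum_rank s) (enum_rank t)) => // e _.
  by apply: enum_rank_inj; apply: val_inj.
have c1 : #|F| = #|[set phi t | t in [set: F]]| by rewrite card_imset // cardsT.
have c2 : (#|[set phi t | t in [set: F]]| <= #|setX I [set: bool]|)%N.
  apply: subset_leq_card; apply/subsetP => x /imsetP [t _ ->].
  by rewrite in_setX in_setT andbT; apply/imsetP; exists t.
move: c2; rewrite cardsX cardsT card_bool -c1 => c2.
lia.
Qed.

Theorem lemma5 (F : finFieldType) (f : {mpoly F[2]}) :
  mnonconst f -> (mtotdeg f <= 2)%N ->
  ((#|F| + 1) %/ 2 <= #|mvalues f|)%N.
Proof.
move=> hnc hdeg.
have hs : (msize f <= 3)%N by move: hdeg; rewrite /mtotdeg; lia.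
pose c a b := f@_(mk a b).
have key : forall D0 D1 t : F,
  f.@[[ffun i => t * (if i == ord0 then D0 else D1)]] =
  (c 2 0 * D0 ^+ 2 + c 1 1 * D0 * D1 + c 0 2 * D1 ^+ 2) * t ^+ 2
   + (c 1 0 * D0 + c 0 1 * D1) * t + c 0 0.
  move=> D0 D1 t; rewrite eval_formula // /Lm !big_cons big_nil /= !ffunE /=.
  rewrite /c; ring.
have main : forall D0 D1 : F,
  ((c 2 0 * D0 ^+ 2 + c 1 1 * D0 * D1 + c 0 2 * D1 ^+ 2) != 0)
    || ((c 1 0 * D0 + c 0 1 * D1) != 0) ->
  ((#|F| + 1) %/ 2 <= #|mvalues f|)%N.
  move=> D0 D1 hAB; apply: leq_trans (quad_count (c 0 0) hAB) _.
  apply: subset_leq_card; apply/subsetP => x /imsetP [t _ ->].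
  rewrite -key; apply/imsetP.
  by exists [ffun i => t * (if i == ord0 then D0 else D1)].
have [m hm hm0] : exists2 m, m \in msupp f & (0 < mdeg m)%N.
  case: (boolP (has (fun m => 0 < mdeg m)%N (msupp f))) => [/hasP//|/hasPn H].
  exfalso; move: hnc; rewrite /mnonconst msizeE big_seq.
  have : (\max_(i <- msupp f | i \in msupp f) (mdeg i).+1 <= 1)%N.
    apply: (big_ind (fun x => x <= 1)%N) => // [x y|i /H]; first by rewrite geq_max => -> ->.
    lia.
  by move=> h1 h2; move: (leq_trans h2 h1).
have hc : [|| c 1 0 != 0, c 0 1 != 0, c 2 0 != 0, c 1 1 != 0 | c 0 2 != 0].
  have : m \in Lm by apply: mem_Lm; exact: (leq_trans (msize_mdeg_lt hm) hs).
  move: hm; rewrite mcoeff_msupp /Lm !inE.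
  move=> hm hL.
  case/orP: hL => [/eqP e|hL].
    have h : mdeg m = 0%N by rewrite e mdeg2.
    by rewrite h in hm0.
  case/orP: hL => [/eqP e|hL].
    by move: hm; rewrite e /c => h1; apply/orP; left.
  case/orP: hL => [/eqP e|hL].
    by move: hm; rewrite e /c => h1; apply/orP; right; apply/orP; left.
  case/orP: hL => [/eqP e|hL].
    by move: hm; rewrite e /c => h1; apply/orP; right; apply/orP; right; apply/orP; left.
  case/orP: hL => [/eqP e|hL].
    by move: hm; rewrite e /c => h1; apply/orP; right; apply/orP; right; apply/orP; right; apply/orP; left.
  by move/eqP: hL => e; move: hm; rewrite e /c => h1; apply/orP; right; apply/orP; right; apply/orP; right; apply/orP; right.
case: (boolP ((c 2 0 != 0) || (c 1 0 != 0))) => h1.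
  apply: (main 1 0).
  have -> : c 2 0 * 1 ^+ 2 + c 1 1 * 1 * 0 + c 0 2 * 0 ^+ 2 = c 2 0 by ring.
  have -> : c 1 0 * 1 + c 0 1 * 0 = c 1 0 by ring.
  exact: h1.
case: (boolP ((c 0 2 != 0) || (c 0 1 != 0))) => h2.
  apply: (main 0 1).
  have -> : c 2 0 * 0 ^+ 2 + c 1 1 * 0 * 1 + c 0 2 * 1 ^+ 2 = c 0 2 by ring.
  have -> : c 1 0 * 0 + c 0 1 * 1 = c 0 1 by ring.
  exact: h2.
apply: (main 1 1).
move: h1 h2 hc; rewrite !negb_or !negbK => /andP[/eqP e20 /eqP e10] /andP[/eqP e02 /eqP e01].
rewrite e20 e10 e02 e01 eqxx /= orbF => h11.
have -> : 0 * 1 ^+ 2 + c 1 1 * 1 * 1 + 0 * 1 ^+ 2 = c 1 1 by ring.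
by rewrite h11.
Qed.
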